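(* For every $n\geq 1$, there exists an NFA $M$ with $n+1$ states over a three-letter alphabet $\Sigma$, with a single initial state and all states final, such that any NFA accepting the complement $\Sigma^*\setminus L(M)$ has at least $2^n$ states.
   Context: An NFA is a quintuple $M=(Q,\Sigma,\delta,q_0,F)$ with finite state set $Q$, transition function $\delta: Q\times\Sigma\to 2^Q$, initial state $q_0$ and final states $F$; $L(M)$ is the set of words $w$ with $\delta(q_0,w)\cap F\ne\emptyset$. *)

(* Defs.v *)
From mathcomp Require Import all_boot.
Set Implicit Arguments. Unset Strict Implicit. Unset Printing Implicit Defensive.

Record nfa (Q Sigma : finType) := NFA {
  nfa_delta : Q -> Sigma -> {set Q};
  nfa_init : Q;
  nfa_final : {set Q} }.

Fixpoint nfa_delta_star (Q Sigma : finType) (M : nfa Q Sigma) (q : Q) (w : seq Sigma)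
  : {set Q} :=
  match w with
  | [::] => [set q]
  | a :: w' => \bigcup_(p in nfa_delta M q a) nfa_delta_star M p w'
  end.

Definition nfa_accepts (Q Sigma : finType) (M : nfa Q Sigma) (w : seq Sigma) : bool :=
  nfa_delta_star M (nfa_init M) w :&: nfa_final M != set0.

(* Main.v *)
Require Import Defs.
From mathcomp Require Import all_boot.
From mathcomp Require Import zify.
Set Implicit Arguments. Unset Strict Implicit. Unset Printing Implicit Defensive.

Lemma ds_cat (Q Sg : finType) (M : nfa Q Sg) q x y r :
  (r \in nfa_delta_star M q (x ++ y)) =
  [exists p, (p \in nfa_delta_star M q x) && (r \in nfa_delta_star M p y)].
Proof.
elim: x q => [|a x IH] q /=.
  apply/idP/existsP => [hr|[p /andP[]]]; first by exists q; rewrite in_set1 eqxx.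
  by rewrite in_set1 => /eqP ->.
apply/bigcupP/existsP => [[p' hp' hr]|[p /andP[/bigcupP[p' hp' hp] hr]]].
  rewrite IH in hr; case/existsP: hr => p /andP[hp hr]; exists p.
  by rewrite hr andbT; apply/bigcupP; exists p'.
by exists p' => //; rewrite IH; apply/existsP; exists p; rewrite hp hr.
Qed.

Definition la : 'I_3 := Ordinal (isT : 0 < 3).
Definition lb : 'I_3 := Ordinal (isT : 1 < 3).
Definition lc : 'I_3 := Ordinal (isT : 2 < 3).

Definition tr n (p : 'I_n.+1) (x : 'I_3) (q : 'I_n.+1) : bool :=
  let p := val p in let q := val q in
  if p == n then
    (if val x == 0 then (q == n) || (q == 0) else if val x == 1 then q == n else false)
  else if val x == 0 then (q == p.+1) && (p.+1 < n)
  else if val x == 1 then q == p.+1 %% n else q == p.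

Definition Mn n : nfa 'I_n.+1 'I_3 := NFA (fun p x => [set q | tr p x q]) ord_max setT.

Notation ds n := (@nfa_delta_star _ _ (Mn n)).

Lemma ds_cons n p x w : ds n p (x :: w) = \bigcup_(r in [set q | tr p x q]) ds n r w.
Proof. by []. Qed.

Lemma step1 n p x w r : [set q | tr p x q] = [set r] -> ds n p (x::w) = ds n r w.
Proof. by rewrite ds_cons => ->; rewrite big_set1. Qed.
Lemma step0 n p x w : [set q | tr p x q] = set0 -> ds n p (x::w) = set0.
Proof. by rewrite ds_cons => ->; rewrite big_set0. Qed.
Lemma step2 n p x w r1 r2 : [set q | tr p x q] = [set r1; r2] ->
  ds n p (x::w) = ds n r1 w :|: ds n r2 w.
Proof. by rewrite ds_cons => ->; rewrite bigcup_setU !big_set1. Qed.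

Lemma inordE n j (q : 'I_n.+1) : j <= n -> (q == inord j) = (val q == j).
Proof. by move=> hj; rewrite -val_eqE /= inordK. Qed.

Lemma tr_sa n : 0 < n -> [set q | tr (@ord_max n) la q] = [set ord_max; inord 0].
Proof.
move=> hn; apply/setP => q; rewrite !inE /tr /= eqxx inordE //.
Qed.
Lemma tr_sb n : [set q | tr (@ord_max n) lb q] = [set ord_max].
Proof. by apply/setP => q; rewrite !inE /tr /= eqxx -val_eqE. Qed.
Lemma tr_sc n : [set q | tr (@ord_max n) lc q] = set0.
Proof. by apply/setP => q; rewrite !inE /tr /= eqxx. Qed.
Lemma tr_jc n j : j < n -> [set q | tr (inord j : 'I_n.+1) lc q] = [set inord j].
Proof.
move=> hj; apply/setP => q; rewrite !inE /tr /= inordK ?inordE; try lia.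
by rewrite (_ : (j == n) = false) //; lia.
Qed.
Lemma tr_jab n j x : j.+1 < n -> (x = la \/ x = lb) ->
  [set q | tr (inord j : 'I_n.+1) x q] = [set inord j.+1].
Proof.
move=> hj hx; apply/setP => q; rewrite !inE /tr /= inordK ?inordE; try lia.
rewrite (_ : (j == n) = false); last lia.
by case: hx => -> /=; rewrite ?hj ?andbT // modn_small.
Qed.
Lemma tr_la_last n : 0 < n -> [set q | tr (inord n.-1 : 'I_n.+1) la q] = set0.
Proof.
move=> hn; apply/setP => q; rewrite !inE /tr /= inordK; last lia.
rewrite (_ : (n.-1 == n) = false); last lia.
rewrite (_ : (n.-1.+1 < n) = false) ?andbF //; lia.
Qed.
Lemma tr_lb_last n : 0 < n -> [set q | tr (inord n.-1 : 'I_n.+1) lb q] = [set inord 0].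
Proof.
move=> hn; apply/setP => q; rewrite !inE /tr /= inordK ?inordE; try lia.
rewrite (_ : (n.-1 == n) = false); last lia.
by rewrite prednK // modnn.
Qed.

Definition Sm n (S : {set 'I_n}) i := [exists k : 'I_n, (val k == i) && (k \in S)].
Definition lt n (S : {set 'I_n}) k : 'I_3 := if Sm S (n.-1 - k) then la else lb.
Definition gk n (S : {set 'I_n}) k := [seq lt S j | j <- iota k (n - k)].

Lemma gk_cons n S k : k < n -> gk S k = lt S k :: @gk n S k.+1.
Proof. by move=> hk; rewrite /gk (_ : n - k = (n - k.+1).+1) //; lia. Qed.
Lemma gk_n n S : @gk n S n = [::].
Proof. by rewrite /gk subnn. Qed.

Lemma y_phase n (hn : 0 < n) T k j : k <= n -> j < n ->
  (ds n (inord j) (@gk n T k) == set0) = (k <= j) && Sm T (j - k).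
Proof.
move eqm: (n - k) => m; elim: m k j eqm => [|m IH] k j eqm hk hj.
  have -> : k = n by lia.
  rewrite gk_n /= -cards_eq0 cards1 /=.
  by rewrite (_ : n <= j = false) //; lia.
rewrite gk_cons; last lia.
have [hj1|hj1] := ltnP j.+1 n.
  rewrite (@step1 _ _ _ _ (inord j.+1)); last first.
    by apply: tr_jab => //; rewrite /lt; case: ifP; auto.
  by rewrite IH //; lia.
have -> : j = n.-1 by lia.
rewrite /lt; case: ifP => hT.
  rewrite step0; last exact: tr_la_last.
  by rewrite eqxx andbT; apply/esym; lia.
rewrite (@step1 _ _ _ _ (inord 0)); last exact: tr_lb_last.
by rewrite IH //; lia.
Qed.

Lemma g_bits n S k j z : j < k -> k <= n ->
  ds n (inord j) (@gk n S k ++ z) = ds n (inord (j + (n - k))) z.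
Proof.
move eqm: (n - k) => m; elim: m k j eqm => [|m IH] k j eqm hjk hk.
  have -> : k = n by lia.
  by rewrite gk_n addn0.
rewrite gk_cons; last lia.
rewrite cat_cons (@step1 _ _ _ _ (inord j.+1)); last first.
  by apply: tr_jab; [lia | rewrite /lt; case: ifP; auto].
by rewrite (IH k.+1); [congr (ds _ (inord _) _); lia | lia | lia | lia].
Qed.

Lemma s_gen n (hn : 0 < n) S z k : k <= n ->
  (ds n ord_max (@gk n S k ++ z) = set0) <->
  (ds n ord_max z = set0 /\ forall i, i < n - k -> Sm S i -> ds n (inord i) z = set0).
Proof.
move eqm: (n - k) => m; elim: m k eqm => [|m IH] k eqm hk.
  have -> : k = n by lia.
  rewrite gk_n /=; split => [->|[//]]; split => // i; lia.
rewrite gk_cons; last lia.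
rewrite cat_cons /lt; case: ifP => hS.
  rewrite (@step2 _ _ _ _ ord_max (inord 0)); last exact: tr_sa.
  rewrite g_bits; [|lia|lia].
  have e : 0 + (n - k.+1) = n.-1 - k by lia.
  rewrite e; split.
    move=> /eqP; rewrite setU_eq0 => /andP[/eqP h1 /eqP h2].
    have [h3 h4] := (IH k.+1 ltac:(lia) ltac:(lia)).1 h1.
    split => // i hi hSi.
    have [hi2|hi2] := ltnP i m; first exact: h4.
    by have -> : i = n.-1 - k by lia.
  move=> [h1 h2]; apply/eqP; rewrite setU_eq0; apply/andP; split; apply/eqP.
    have hk1 : n - k.+1 = m by lia.
    apply: (proj2 (IH k.+1 hk1 ltac:(lia))); split => // i hi; apply: h2; lia.
  by apply: h2 => //; lia.
rewrite (@step1 _ _ _ _ ord_max); last exact: tr_sb.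
rewrite IH; [|lia|lia]; split => [[h1 h2]|[h1 h2]]; split => // i hi hSi.
  have [hi'|hi'] := ltnP i m; first exact: h2.
  have ei : i = n.-1 - k by lia.
  by rewrite ei hS in hSi.
by apply: h2 => //; lia.
Qed.

Lemma key n (hn : 0 < n) S T :
  (ds n ord_max (@gk n S 0 ++ lc :: @gk n T 0) = set0) <->
  (forall i, i < n -> Sm S i -> Sm T i).
Proof.
rewrite s_gen //; rewrite subn0.
have h0 : ds n ord_max (lc :: gk T 0) = set0 by rewrite step0 //; exact: tr_sc.
split => [[_ h] i hi hSi|h]; last split => // i hi hSi.
  have := h i hi hSi; rewrite (step1 _ (tr_jc hi)) => /eqP.
  rewrite y_phase //.
  by rewrite subn0; case/andP.
rewrite (step1 _ (tr_jc hi)); apply/eqP; rewrite y_phase //.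
by rewrite subn0 h.
Qed.

Lemma accE n w : nfa_accepts (Mn n) w = (ds n ord_max w != set0).
Proof. by rewrite /nfa_accepts /= setIT. Qed.

Theorem mainTheorem15 (n : nat) (hn : 1 <= n) :
  exists M : nfa 'I_n.+1 'I_3,
    nfa_final M = [set: 'I_n.+1] /\
    forall (Q' : finType) (M' : nfa Q' 'I_3),
      (forall w : seq 'I_3, nfa_accepts M' w = ~~ nfa_accepts M w) ->
      2 ^ n <= #|Q'|.
Proof.
exists (Mn n); split => // Q' M' HM.
pose X S := @gk n S 0.
pose Y S := lc :: @gk n S 0.
pose P S := fun p => (p \in nfa_delta_star M' (nfa_init M') (X S)) &&
   (nfa_delta_star M' p (Y S) :&: nfa_final M' != set0).
have acc S T : nfa_accepts M' (X S ++ Y T) -> forall i, i < n -> Sm S i -> Sm T i.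
  by rewrite HM accE negbK => /eqP /(key hn).
have exP S : exists p, P S p.
  have : nfa_accepts M' (X S ++ Y S) by rewrite HM accE negbK; apply/eqP/key.
  rewrite /nfa_accepts; case/set0Pn => r; rewrite inE ds_cat => /andP[].
  case/existsP => p /andP[hp hr] hF; exists p; rewrite /P hp /=.
  by apply/set0Pn; exists r; rewrite inE hr.
pose f S := xchoose (exP S).
have finj : injective f.
  move=> S T eST.
  have hS := xchooseP (exP S); have hT := xchooseP (exP T).
  rewrite -/(f S) -/(f T) eST in hS hT.
  have sub U V : P U (f T) -> P V (f T) -> forall i, i < n -> Sm U i -> Sm V i.
    move=> /andP[hU _] /andP[_ hV]; apply: acc.
    rewrite /nfa_accepts; case/set0Pn: hV => r; rewrite inE => /andP[hr hF].
    by apply/set0Pn; exists r; rewrite inE hF andbT ds_cat; apply/existsP; exists (f T); rewrite hU.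
  apply/setP => k; apply/idP/idP => hk.
    have : Sm T k by apply: (sub S T) => //; apply/existsP; exists k; rewrite eqxx.
    by case/existsP => k' /andP[/eqP/val_inj ->].
  have : Sm S k by apply: (sub T S) => //; apply/existsP; exists k; rewrite eqxx.
  by case/existsP => k' /andP[/eqP/val_inj ->].
have := leq_card f finj.
have : #|powerset [set: 'I_n]| <= #|{set 'I_n}| by apply: max_card.
by rewrite card_powerset cardsT card_ord; apply: leq_trans.
Qed.
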